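(* Let $\mathbf X$ be a periodic stationary process with period $1$, let $L$ be a first-time intrinsic location functional, and let $T\in(0,1]$. Then the càdlàg density of $L(\mathbf X,[0,T])$ on $(0,T)$ is non-increasing.
   Context: Let $H$ be a set of functions $\mathbb R\to\mathbb R$ with period $1$, invariant under shifts ($\theta_cg(x)=g(x+c)$), with the cylindrical $\sigma$-field; $\mathcal I$ is the set of compact intervals $[a,b]$, $a<b$. An intrinsic location functional is a map $L:H\times\mathcal I\to\mathbb R\cup\{\infty\}$ such that: (i) $L(\cdot,I)$ is measurable; (ii) $L(g,I)\in I\cup\{\infty\}$; (iii) $L(g,I)=L(\theta_cg,I-c)+c$ (with $\infty+c=\infty$); (iv) if $I_2\subseteq I_1$ and $L(g,I_1)\in I_2$ then $L(g,I_2)=L(g,I_1)$; (v) if $I_2\subseteq I_1$ and $L(g,I_2)\ne\infty$ then $L(g,I_1)\neq\infty$. A partially ordered random set representation of $L$ is an assignment, to each $g\in H$, of a set $S(g)\subseteq\mathbb R$ and a partial order $\preceq$ on $S(g)$ such that $S(g)=S(\theta_cg)+c$ for all $c$, $t_1\preceq t_2$ in $S(g)$ implies $t_1-c\preceq t_2-c$ in $S(\theta_cg)$, and for each $I\in\mathcal I$: if $S(g)\cap I=\emptyset$ then $L(g,I)=\infty$, otherwise $L(g,I)$ is the unique maximal element of $S(g)\cap I$ under $\preceq$. (Every intrinsic location functional has such a representation.) $L$ is a first-time intrinsic location functional if it has such a representation with the property that for all $t_1,t_2\in S(g)$, $t_1\le t_2$ implies $t_2\preceq t_1$. A periodic stationary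 process with period $1$ is a stationary process with continuous sample paths of period $1$ lying in $H$. *)

(* Defs.v *)
From Stdlib Require Import Reals Lra.
Open Scope R_scope.

Definition is_sigma {T : Type} (S : (T -> Prop) -> Prop) : Prop :=
  S (fun _ => True) /\
  (forall A, S A -> S (fun x => ~ A x)) /\
  (forall A : nat -> T -> Prop, (forall n, S (A n)) -> S (fun x => exists n, A n x)).

Definition generated {T : Type} (G : (T -> Prop) -> Prop) (A : T -> Prop) : Prop :=
  forall S, is_sigma S -> (forall B, G B -> S B) -> S A.

Record prob_space := {
  Omega : Type;
  event : (Omega -> Prop) -> Prop;
  Pr : (Omega -> Prop) -> R;
  event_sigma : is_sigma event;
  Pr_nonneg : forall A, event A -> 0 <= Pr A;
  Pr_full : Pr (fun _ => True) = 1;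
  Pr_countably_additive : forall A : nat -> Omega -> Prop,
      (forall n, event (A n)) ->
      (forall n m x, n <> m -> A n x -> A m x -> False) ->
      infinite_sum (fun n => Pr (A n)) (Pr (fun x => exists n, A n x))
}.

Definition shift (c : R) (g : R -> R) : R -> R := fun x => g (x + c).

Definition good_H (H : (R -> R) -> Prop) : Prop :=
  (forall g, H g -> forall x, g (x + 1) = g x) /\
  (forall g c, H g -> H (shift c g)).

(* cylindrical sigma-field on R^R: generated by the evaluations g |-> g t,
   i.e. by the sets {g | g t <= c} *)
Definition cyl_measurable (A : (R -> R) -> Prop) : Prop :=
  generated (fun B => exists t c, forall g, B g <-> g t <= c) A.

(* trace of the cylindrical sigma-field on H *)
Definition H_measurable (H : (R -> R) -> Prop) (A : (R -> R) -> Prop) : Prop :=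
  exists B, cyl_measurable B /\ (forall g, H g -> (A g <-> B g)) /\
            (forall g, A g -> H g).

(* ---------- intrinsic location functionals ----------
   A compact interval [a,b] (a<b) is encoded by its endpoints (a,b);
   the value infinity is encoded by None. *)
Definition ilf (H : (R -> R) -> Prop) (L : (R -> R) -> R -> R -> option R) : Prop :=
  (* (i) measurability of L(., I) (w.r.t. Borel sets of R u {infinity}) *)
  (forall a b, a < b ->
     H_measurable H (fun g => H g /\ L g a b = None) /\
     forall c, H_measurable H (fun g => H g /\ exists t, L g a b = Some t /\ t <= c)) /\
  (forall g a b t, H g -> a < b -> L g a b = Some t -> a <= t <= b) /\
  (forall g a b c, H g -> a < b ->
     L g a b = option_map (fun t => t + c) (L (shift c g) (a - c) (b - c))) /\
  (forall g a1 b1 a2 b2 t, H g -> a2 < b2 -> a1 <= a2 -> b2 <= b1 ->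
     L g a1 b1 = Some t -> a2 <= t <= b2 -> L g a2 b2 = Some t) /\
  (forall g a1 b1 a2 b2, H g -> a2 < b2 -> a1 <= a2 -> b2 <= b1 ->
     L g a2 b2 <> None -> L g a1 b1 <> None).

Definition po_rep (H : (R -> R) -> Prop) (L : (R -> R) -> R -> R -> option R)
  (S : (R -> R) -> R -> Prop) (le : (R -> R) -> R -> R -> Prop) : Prop :=
  (forall g, H g ->
     (forall t, S g t -> le g t t) /\
     (forall t1 t2, S g t1 -> S g t2 -> le g t1 t2 -> le g t2 t1 -> t1 = t2) /\
     (forall t1 t2 t3, S g t1 -> S g t2 -> S g t3 ->
        le g t1 t2 -> le g t2 t3 -> le g t1 t3)) /\
  (forall g c, H g -> forall t, S g t <-> S (shift c g) (t - c)) /\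
  (forall g c t1 t2, H g -> S g t1 -> S g t2 -> le g t1 t2 ->
     le (shift c g) (t1 - c) (t2 - c)) /\
  (forall g a b, H g -> a < b ->
     let inI := fun t => S g t /\ a <= t <= b in
     let maximal := fun m => inI m /\ forall u, inI u -> le g m u -> u = m in
     ((forall t, ~ inI t) -> L g a b = None) /\
     ((exists t, inI t) ->
        exists t, L g a b = Some t /\ maximal t /\ forall m, maximal m -> m = t)).

Definition first_time_ilf (H : (R -> R) -> Prop) (L : (R -> R) -> R -> R -> option R) : Prop :=
  ilf H L /\
  exists S le, po_rep H L S le /\
    forall g, H g -> forall t1 t2, S g t1 -> S g t2 -> t1 <= t2 -> le g t2 t1.

Definition periodic_stationary_process (P : prob_space) (H : (R -> R) -> Prop)
  (X : Omega P -> R -> R) : Prop :=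
  (forall w, H (X w)) /\
  (forall w, continuity (X w)) /\
  (forall t c, event P (fun w => X w t <= c)) /\
  (forall A c, cyl_measurable A ->
     Pr P (fun w => A (X w)) = Pr P (fun w => A (shift c (X w)))).

Definition cadlag_on (f : R -> R) (l r : R) : Prop :=
  forall x, l < x < r ->
    (forall eps, eps > 0 -> exists del, del > 0 /\
        forall y, x <= y < x + del -> Rabs (f y - f x) < eps) /\
    (exists lim, forall eps, eps > 0 -> exists del, del > 0 /\
        forall y, x - del < y < x -> Rabs (f y - lim) < eps).

Definition density_on (P : prob_space) (Y : Omega P -> option R) (f : R -> R) (l r : R) : Prop :=
  forall a b, l < a -> a < b -> b < r ->
    exists pr : Riemann_integrable f a b,
      RiemannInt pr = Pr P (fun w => exists t, Y w = Some t /\ a < t <= b).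

Definition nonincreasing_on (f : R -> R) (l r : R) : Prop :=
  forall x y, l < x -> x <= y -> y < r -> f y <= f x.

(* Main.v *)
From Coquelicot Require Import Coquelicot.
From Stdlib Require Import Reals Lra Psatz ZArith FunctionalExtensionality PropExtensionality ClassicalEpsilon Classical.
Require Import Defs.
Open Scope R_scope.

Lemma pred_ext {T} (A B : T -> Prop) : (forall x, A x <-> B x) -> A = B.
Proof. intro h; apply functional_extensionality; intro x; apply propositional_extensionality; apply h. Qed.

Lemma sig_ext {T} (S : (T -> Prop) -> Prop) A B : S A -> (forall x, A x <-> B x) -> S B.
Proof. intros h e; rewrite <- (pred_ext _ _ e); exact h. Qed.

Lemma sig_empty {T} (S : (T -> Prop) -> Prop) : is_sigma S -> S (fun _ => False).
Proof. intros [h1 [h2 h3]]. apply (sig_ext _ _ _ (h2 _ h1)). tauto. Qed.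

Lemma sig_inter {T} (S : (T -> Prop) -> Prop) A B : is_sigma S -> S A -> S B -> S (fun x => A x /\ B x).
Proof.
  intros hs hA hB. destruct hs as [h1 [h2 h3]].
  set (C := fun n : nat => match n with O => fun x => ~ A x | _ => fun x => ~ B x end).
  assert (hC : forall n, S (C n)) by (intros [|n]; simpl; auto).
  apply (sig_ext _ _ _ (h2 _ (h3 _ hC))). intro x; split.
  - intro H. split.
    + apply NNPP; intro n; apply H; exists O; exact n.
    + apply NNPP; intro n; apply H; exists 1%nat; exact n.
  - intros [a b] [[|n] hn]; simpl in hn; tauto.
Qed.

Lemma gen_sigma {T} (G : (T -> Prop) -> Prop) : is_sigma (generated G).
Proof.
  split; [|split].
  - intros S hS _. apply hS.
  - intros A hA S hS hG. apply hS. apply hA; auto.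
  - intros A hA S hS hG. apply hS. intro n; apply hA; auto.
Qed.

Lemma gen_incl {T} (G : (T -> Prop) -> Prop) B : G B -> generated G B.
Proof. intros h S _ hG; auto. Qed.

Lemma cyl_event (P : prob_space) (Z : Omega P -> R -> R) :
  (forall t c, event P (fun w => Z w t <= c)) ->
  forall A, cyl_measurable A -> event P (fun w => A (Z w)).
Proof.
  intros hZ A hA.
  apply (hA (fun B => event P (fun w => B (Z w)))).
  - destruct (event_sigma P) as [h1 [h2 h3]]. split; [|split].
    + exact h1.
    + intros B hB. exact (h2 _ hB).
    + intros B hB. exact (h3 (fun n w => B n (Z w)) hB).
  - intros B [t [c hB]]. apply (sig_ext _ _ _ (hZ t c)). intro w; rewrite hB; tauto.
Qed.

Lemma Pr_ext (P : prob_space) A B : (forall w, A w <-> B w) -> Pr P A = Pr P B.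
Proof. intro h; rewrite (pred_ext _ _ h); reflexivity. Qed.

Lemma Pr_empty (P : prob_space) : Pr P (fun _ => False) = 0.
Proof.
  pose proof (Pr_countably_additive P (fun _ _ => False)) as H.
  assert (e : event P (fun _ => False)) by apply (sig_empty _ (event_sigma P)).
  specialize (H (fun _ => e) (fun n m x _ h _ => h)). cbv beta in H.
  rewrite (Pr_ext P (fun x => exists n : nat, False) (fun _ => False)) in H
    by (intro; split; [intros [_ h]; exact h| tauto]).
  set (p := Pr P (fun _ => False)) in *.
  destruct (Req_dec p 0) as [h|h]; [exact h|exfalso].
  destruct (H 1 Rlt_0_1) as [N hN].
  destruct (INR_unbounded (1 / Rabs p)) as [n0 hn0].
  specialize (hN (N + n0)%nat ltac:(lia)).
  rewrite sum_cte in hN. unfold R_dist in hN.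
  replace (p * INR (S (N + n0)) - p) with (p * INR (N + n0)) in hN by (rewrite S_INR; ring).
  rewrite Rabs_mult, (Rabs_right (INR _)) in hN by (apply Rle_ge, pos_INR).
  rewrite plus_INR in hN.
  assert (hp : 0 < Rabs p) by (apply Rabs_pos_lt; exact h).
  assert (INR n0 * Rabs p > 1).
  { apply Rmult_gt_compat_r with (r := Rabs p) in hn0; [|exact hp].
    unfold Rdiv in hn0. rewrite Rmult_1_l, Rinv_l in hn0 by lra. lra. }
  pose proof (pos_INR N). nra.
Qed.

Lemma Pr_add (P : prob_space) A B : event P A -> event P B ->
  (forall w, A w -> B w -> False) ->
  Pr P (fun w => A w \/ B w) = Pr P A + Pr P B.
Proof.
  intros hA hB hd.
  set (C := fun n : nat => match n with O => A | 1%nat => B | _ => fun _ => False end).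
  pose proof (Pr_countably_additive P C) as H.
  assert (hC : forall n, event P (C n)).
  { intros [|[|n]]; simpl; auto. apply (sig_empty _ (event_sigma P)). }
  specialize (H hC).
  assert (hd' : forall n m x, n <> m -> C n x -> C m x -> False).
  { intros [|[|n]] [|[|m]] x hnm; simpl; try tauto; try (intros; eapply hd; eauto). }
  specialize (H hd').
  rewrite (Pr_ext P (fun x => exists n, C n x) (fun w => A w \/ B w)) in H.
  2:{ intro w; split.
      - intros [[|[|n]] h]; simpl in h; tauto.
      - intros [h|h]; [exists O|exists 1%nat]; exact h. }
  apply (uniqueness_sum _ _ _ H).
  intros eps heps. exists 1%nat. intros n hn.
  assert (sum_f_R0 (fun n => Pr P (C n)) n = Pr P A + Pr P B) as ->.
  { induction n as [|n IH]; [lia|].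
    destruct n as [|n]; [simpl; ring|].
    simpl sum_f_R0 in *. rewrite IH by lia. simpl. rewrite Pr_empty. ring. }
  unfold R_dist; rewrite Rminus_diag, Rabs_R0; exact heps.
Qed.

Lemma Pr_mono (P : prob_space) A B : event P A -> event P B ->
  (forall w, A w -> B w) -> Pr P A <= Pr P B.
Proof.
  intros hA hB hAB.
  assert (hD : event P (fun w => B w /\ ~ A w)).
  { apply sig_inter; auto. apply event_sigma. apply (event_sigma P); auto. }
  rewrite (Pr_ext P B (fun w => A w \/ (B w /\ ~ A w))) by (intro w; split; [tauto|]; intros [h|h]; [apply hAB; exact h|tauto]).
  rewrite Pr_add; auto; [|tauto].
  pose proof (Pr_nonneg P _ hD). lra.
Qed.


Definition EL (L : (R -> R) -> R -> R -> option R) g al be a b :=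
  exists t, L g al be = Some t /\ a < t <= b.

Lemma EL_cyl H L al be a b : ilf H L -> al < be ->
  exists B, cyl_measurable B /\ forall g, H g -> (EL L g al be a b <-> B g).
Proof.
  intros [hm _] hab. destruct (hm al be hab) as [_ hc].
  destruct (hc b) as [Bb [cb [eb _]]]. destruct (hc a) as [Ba [ca [ea _]]].
  exists (fun g => Bb g /\ ~ Ba g). split.
  - apply sig_inter; [apply gen_sigma|exact cb|]. apply (gen_sigma _); exact ca.
  - intros g hg. rewrite <- (eb g hg), <- (ea g hg). unfold EL. split.
    + intros [t [ht [h1 h2]]]. split; [split; [exact hg|exists t; auto]|].
      intros [_ [t' [ht' h']]]. rewrite ht in ht'. injection ht' as ->. lra.
    + intros [[_ [t [ht h]]] hn]. exists t. split; [exact ht|]. split; [|exact h].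
      apply Rnot_le_lt. intro h'. apply hn. split; [exact hg|]. exists t; auto.
Qed.

Lemma EL_event P H L (Z : Omega P -> R -> R) al be a b : ilf H L -> al < be ->
  (forall w, H (Z w)) -> (forall t c, event P (fun w => Z w t <= c)) ->
  event P (fun w => EL L (Z w) al be a b).
Proof.
  intros hL hab hZ hc. destruct (EL_cyl H L al be a b hL hab) as [B [cB eB]].
  apply (sig_ext _ _ _ (cyl_event P Z hc B cB)). intro w. rewrite (eB _ (hZ w)). tauto.
Qed.

Section Rep.
Variables (H : (R -> R) -> Prop) (L : (R -> R) -> R -> R -> option R)
  (S : (R -> R) -> R -> Prop) (le : (R -> R) -> R -> R -> Prop).
Hypothesis hrep : po_rep H L S le.
Hypothesis hft : forall g, H g -> forall t1 t2, S g t1 -> S g t2 -> t1 <= t2 -> le g t2 t1.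

Lemma Lchar g al be m : H g -> al < be ->
  (L g al be = Some m <-> (S g m /\ al <= m <= be /\ forall s, S g s -> al <= s <= be -> m <= s)).
Proof.
  intros hg hab. destruct hrep as [_ [_ [_ h4]]]. destruct (h4 g al be hg hab) as [_ hex].
  simpl in hex.
  assert (key : forall s, S g s -> al <= s <= be -> exists t, L g al be = Some t /\
             S g t /\ al <= t <= be /\ forall s, S g s -> al <= s <= be -> t <= s).
  { intros s hs hsi. destruct (hex (ex_intro _ s (conj hs hsi))) as [t [ht [[[hSt hti] hmax] _]]].
    exists t. split; [exact ht|]. split; [exact hSt|]. split; [exact hti|].
    intros u hu hui. apply Rnot_lt_le. intro hlt.
    assert (u = t) by (apply hmax; [split; auto| apply hft; auto; lra]). lra. }
  split.
  - intro hL. destruct hrep as [_ [_ [_ h4']]]. destruct (h4' g al be hg hab) as [hnone _].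
    destruct (classic (exists t, S g t /\ al <= t <= be)) as [[s [hs hsi]]|hn].
    + destruct (key s hs hsi) as [t [ht rest]]. rewrite hL in ht. injection ht as ->. exact rest.
    + rewrite hnone in hL; [discriminate|]. intros t ht; apply hn; exists t; exact ht.
  - intros [hs [hsi hmin]]. destruct (key m hs hsi) as [t [ht [hSt [hti htm]]]].
    rewrite ht. f_equal. pose proof (htm m hs hsi). pose proof (hmin t hSt hti). lra.
Qed.
End Rep.


Section Prob.
Variables (P : prob_space) (H : (R -> R) -> Prop) (X : Omega P -> R -> R)
  (L : (R -> R) -> R -> R -> option R) (T : R).
Hypothesis hH : good_H H.
Hypothesis hX : periodic_stationary_process P H X.
Hypothesis hL : ilf H L.
Variables (S : (R -> R) -> R -> Prop) (le : (R -> R) -> R -> R -> Prop).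
Hypothesis hrep : po_rep H L S le.
Hypothesis hft : forall g, H g -> forall t1 t2, S g t1 -> S g t2 -> t1 <= t2 -> le g t2 t1.
Hypothesis hT : 0 < T.

Lemma XH w : H (X w). Proof. apply hX. Qed.
Lemma Xc t c : event P (fun w => X w t <= c). Proof. apply hX. Qed.
Lemma sXH s w : H (shift s (X w)). Proof. apply hH, XH. Qed.
Lemma sXc s t c : event P (fun w => shift s (X w) t <= c). Proof. unfold shift; apply Xc. Qed.

Lemma G_add a b : 0 <= a <= b ->
  Pr P (fun w => EL L (X w) 0 T 0 b) = Pr P (fun w => EL L (X w) 0 T 0 a) + Pr P (fun w => EL L (X w) 0 T a b).
Proof.
  intro hab. rewrite <- Pr_add.
  - apply Pr_ext. intro w; unfold EL; split.
    + intros [t [ht hi]]. destruct (Rle_or_lt t a); [left|right]; exists t; split; auto; lra.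
    + intros [[t [ht hi]]|[t [ht hi]]]; exists t; split; auto; lra.
  - apply EL_event with H; auto using XH, Xc.
  - apply EL_event with H; auto using XH, Xc.
  - intros w [t [ht hi]] [t' [ht' hi']]. rewrite ht in ht'. injection ht' as <-. lra.
Qed.

Lemma G_nonneg a b : 0 <= Pr P (fun w => EL L (X w) 0 T a b).
Proof. apply Pr_nonneg. apply EL_event with H; auto using XH, Xc. Qed.

Lemma G_trans u h s : 0 <= u -> 0 < h -> 0 < s -> u + h + s <= T ->
  Pr P (fun w => EL L (X w) 0 T (u + s) (u + s + h)) <= Pr P (fun w => EL L (X w) 0 T u (u + h)).
Proof.
  intros hu hh hs hT'.
  assert (hsT : 0 < T - s) by lra.
  apply Rle_trans with (Pr P (fun w => EL L (shift s (X w)) 0 (T - s) u (u + h))).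
  { apply Pr_mono.
    - apply EL_event with H; auto using XH, Xc.
    - apply EL_event with H; auto using sXH, sXc.
    - intros w [t [ht hi]].
      assert (ht2 : L (X w) s T = Some t).
      { apply (Lchar H L S le hrep hft); [apply XH|lra|].
        apply (Lchar H L S le hrep hft) in ht; [|apply XH|lra].
        destruct ht as [hS [hti hmin]]. split; [exact hS|]. split; [lra|].
        intros s' hs' hsi. apply hmin; auto; lra. }
      destruct hL as [_ [_ [h3 _]]].
      rewrite (h3 (X w) s T s (XH w) ltac:(lra)) in ht2.
      replace (s - s) with 0 in ht2 by ring.
      destruct (L (shift s (X w)) 0 (T - s)) as [t'|] eqn:e; simpl in ht2; [|discriminate].
      injection ht2 as ht2. exists t'. split; [exact e|lra]. }
  apply Rle_trans with (Pr P (fun w => EL L (X w) 0 (T - s) u (u + h))).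
  { destruct (EL_cyl H L 0 (T - s) u (u + h) hL hsT) as [B [cB eB]].
    destruct hX as [_ [_ [_ hst]]].
    rewrite (Pr_ext P (fun w => EL L (X w) 0 (T - s) u (u + h)) (fun w => B (X w))) by (intro w; apply eB, XH).
    rewrite (Pr_ext P (fun w => EL L (shift s (X w)) _ _ _ _) (fun w => B (shift s (X w))))
      by (intro w; apply eB, sXH).
    rewrite (hst B s cB). apply Rle_refl. }
  apply Pr_mono.
  - apply EL_event with H; auto using XH, Xc.
  - apply EL_event with H; auto using XH, Xc.
  - intros w [t [ht hi]]. exists t. split; [|exact hi].
    apply (Lchar H L S le hrep hft) in ht; [|apply XH|lra].
    destruct ht as [hS [hti hmin]].
    assert (hne : exists m, L (X w) 0 T = Some m).
    { destruct hrep as [_ [_ [_ h4]]]. destruct (h4 (X w) 0 T (XH w) hT) as [_ hex].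
      simpl in hex. destruct hex as [m [hm _]]. exists t; split; [exact hS|lra]. exists m; exact hm. }
    destruct hne as [m hm]. rewrite hm.
    apply (Lchar H L S le hrep hft) in hm; [|apply XH|lra].
    destruct hm as [hSm [hmi hmmin]].
    assert (m <= t) by (apply hmmin; auto; lra).
    assert (t <= m) by (apply hmin; auto; lra).
    f_equal; lra.
Qed.
End Prob.


Section Ana.
Variables (F : R -> R) (T : R).
Hypothesis hT : 0 < T.
Hypothesis Fmono : forall x y, 0 <= x -> x <= y -> y <= T -> F x <= F y.
Hypothesis Ftr : forall u h s, 0 <= u -> 0 < h -> 0 <= s -> u + h + s <= T ->
  F (u + s + h) - F (u + s) <= F (u + h) - F u.

Lemma Ftr' u v h : 0 <= u -> u <= v -> 0 < h -> v + h <= T -> F (v + h) - F v <= F (u + h) - F u.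
Proof.
  intros. pose proof (Ftr u h (v - u) ltac:(lra) ltac:(lra) ltac:(lra) ltac:(lra)) as E.
  replace (u + (v - u) + h) with (v + h) in E by ring. replace (u + (v - u)) with v in E by ring. exact E.
Qed.

Lemma concave_main x y z n : 0 <= x -> x < y -> y < z -> z < T -> (1 <= n)%nat ->
  (y - x) / INR n <= T - z ->
  (F z - F y) * (y - x) <= (z - y) * (F y - F x) + (y - x) * (F y - F x) / INR n.
Proof.
  intros hx hxy hyz hz hn hd.
  assert (hn' : 1 <= INR n) by (apply (le_INR 1); exact hn).
  set (p := y - x) in *. assert (hp : p = y - x) by reflexivity. clearbody p.
  set (q := z - y). assert (hq' : q = z - y) by reflexivity. clearbody q.
  set (d := p / INR n) in *. assert (hd' : d = p / INR n) by reflexivity. clearbody d.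
  assert (hdp : 0 < d) by (rewrite hd'; apply Rdiv_lt_0_compat; lra).
  assert (hnd : INR n * d = p) by (rewrite hd'; field; lra).
  assert (hdle : d <= p) by (rewrite <- hnd; nra).
  set (e := F y - F (y - d)). assert (he' : e = F y - F (y - d)) by reflexivity. clearbody e.
  assert (he : 0 <= e) by (rewrite he'; pose proof (Fmono (y - d) y); lra).
  assert (C1 : forall m, (m <= n)%nat -> F (x + INR m * d) - F x >= INR m * e).
  { induction m as [|m IH]; intro hm.
    - simpl. replace (x + 0 * d) with x by ring. lra.
    - specialize (IH ltac:(lia)).
      assert (hmn : INR (S m) <= INR n) by (apply le_INR; exact hm).
      rewrite S_INR in *.
      pose proof (pos_INR m).
      pose proof (Ftr' (x + INR m * d) (y - d) d ltac:(nra) ltac:(nra) hdp ltac:(lra)) as E.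
      replace (y - d + d) with y in E by ring.
      replace (x + (INR m + 1) * d) with (x + INR m * d + d) by ring.
      rewrite <- he' in E. nra. }
  assert (C2 : forall m, y + INR m * d <= T -> F (y + INR m * d) - F y <= INR m * e).
  { induction m as [|m IH]; intro hm.
    - simpl. replace (y + 0 * d) with y by ring. lra.
    - rewrite S_INR in *. pose proof (pos_INR m).
      specialize (IH ltac:(nra)).
      pose proof (Ftr' (y - d) (y + INR m * d) d ltac:(lra) ltac:(nra) hdp ltac:(lra)) as E.
      replace (y - d + d) with y in E by ring.
      replace (y + (INR m + 1) * d) with (y + INR m * d + d) by ring.
      rewrite <- he' in E. nra. }
  destruct (archimed (q / d)) as [a1 a2].
  assert (hq : 0 < q) by lra.
  assert (hqd : 0 < q / d) by (apply Rdiv_lt_0_compat; lra).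
  assert (hz0 : (0 <= up (q / d))%Z) by (apply le_IZR; lra).
  set (k := Z.to_nat (up (q / d))).
  assert (hk : INR k = IZR (up (q / d))) by (unfold k; rewrite INR_IZR_INZ, Z2Nat.id; auto).
  assert (hk1 : q < INR k * d).
  { rewrite hk. apply Rmult_lt_reg_r with (/ d); [apply Rinv_0_lt_compat; lra|].
    rewrite Rmult_assoc, Rinv_r, Rmult_1_r by lra. exact a1. }
  assert (hk2 : INR k * d <= q + d).
  { rewrite hk. assert (IZR (up (q / d)) <= q / d + 1) by lra.
    apply Rle_trans with ((q / d + 1) * d); [apply Rmult_le_compat_r; lra|].
    right; field; lra. }
  assert (hA : F z - F y <= INR k * e).
  { pose proof (C2 k ltac:(lra)).
    pose proof (Fmono z (y + INR k * d) ltac:(lra) ltac:(lra) ltac:(lra)). lra. }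
  assert (hB : F y - F x >= INR n * e).
  { pose proof (C1 n (le_n n)). rewrite hnd, hp in H. replace (x + (y - x)) with y in H by ring. exact H. }
  assert (hk0 : 0 <= INR k) by apply pos_INR.
  assert (Step1 : (F z - F y) * p <= INR k * e * p) by (apply Rmult_le_compat_r; lra).
  assert (Step2 : INR k * e * p = (INR k * d) * (INR n * e)) by (rewrite <- hnd; ring).
  assert (Step3 : (INR k * d) * (INR n * e) <= (INR k * d) * (F y - F x)) by (apply Rmult_le_compat_l; nra).
  assert (Step4 : (INR k * d) * (F y - F x) <= (q + d) * (F y - F x)) by (apply Rmult_le_compat_r; nra).
  replace (q * (F y - F x) + p * (F y - F x) / INR n) with ((q + d) * (F y - F x))
    by (rewrite hd'; field; lra).
  lra.
Qed.

Lemma concave x y z : 0 <= x -> x < y -> y < z -> z < T ->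
  (F z - F y) * (y - x) <= (F y - F x) * (z - y).
Proof.
  intros hx hxy hyz hz.
  assert (hB : 0 <= F y - F x) by (pose proof (Fmono x y); lra).
  apply Rnot_lt_le; intro hc.
  set (e := (F z - F y) * (y - x) - (F y - F x) * (z - y)).
  assert (he : 0 < e) by (unfold e; lra).
  destruct (INR_unbounded (1 + (y - x) / (T - z) + (y - x) * (F y - F x) / e)) as [n hn].
  assert (h1 : 0 <= (y - x) / (T - z)) by (apply Rle_mult_inv_pos; lra).
  assert (h2 : 0 <= (y - x) * (F y - F x) / e) by (apply Rle_mult_inv_pos; nra).
  assert (hn1 : (1 <= n)%nat).
  { destruct n; [simpl in hn; lra|lia]. }
  assert (hnp : 0 < INR n) by lra.
  assert (hd : (y - x) / INR n <= T - z).
  { apply Rmult_le_reg_r with (INR n); [lra|]. unfold Rdiv. rewrite Rmult_assoc, Rinv_l, Rmult_1_r by lra.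
    assert ((y - x) / (T - z) < INR n) by lra.
    apply Rmult_lt_compat_r with (r := T - z) in H; [|lra]. unfold Rdiv in H.
    rewrite Rmult_assoc, Rinv_l, Rmult_1_r in H by lra. lra. }
  pose proof (concave_main x y z n hx hxy hyz hz hn1 hd) as M.
  assert ((y - x) * (F y - F x) / INR n < e).
  { apply Rmult_lt_reg_r with (INR n); [lra|]. unfold Rdiv. rewrite Rmult_assoc, Rinv_l, Rmult_1_r by lra.
    assert ((y - x) * (F y - F x) / e < INR n) by lra.
    apply Rmult_lt_compat_r with (r := e) in H; [|lra]. unfold Rdiv in H.
    rewrite Rmult_assoc, Rinv_l, Rmult_1_r in H by lra. lra. }
  unfold e in *. lra.
Qed.

Lemma div_le a b h c : 0 < h -> 0 < c -> a * c <= b * h -> a / h <= b / c.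
Proof.
  intros hh hc e. apply Rmult_le_reg_r with (h * c); [nra|].
  replace (a / h * (h * c)) with (a * c) by (field; lra).
  replace (b / c * (h * c)) with (b * h) by (field; lra). lra.
Qed.

Definition Eset x s := exists h, 0 < h /\ h < T - x /\ s = (F (x + h) - F x) / h.

Lemma slope_nonneg x h : 0 <= x -> 0 < h -> x + h <= T -> 0 <= (F (x + h) - F x) / h.
Proof. intros. apply Rle_mult_inv_pos; [|lra]. pose proof (Fmono x (x + h)). lra. Qed.

Lemma ex_lub x : exists m, (0 < x < T -> is_lub (Eset x) m).
Proof.
  destruct (classic (0 < x < T)) as [hx|hx]; [|exists 0; tauto].
  assert (hb : bound (Eset x)).
  { exists ((F x - F 0) / x). intros s [h [h1 [h2 ->]]].
    apply div_le; [lra|lra|]. pose proof (concave 0 x (x + h)) as C.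
    replace (x + h - x) with h in C by ring. replace (x - 0) with x in C by ring. apply C; lra. }
  assert (hne : exists s, Eset x s).
  { exists ((F (x + (T - x) / 2) - F x) / ((T - x) / 2)). exists ((T - x) / 2). split; [lra|]. split; [lra|reflexivity]. }
  destruct (completeness _ hb hne) as [m hm]. exists m; auto.
Qed.

Definition f x := proj1_sig (constructive_indefinite_description _ (ex_lub x)).

Lemma f_lub x : 0 < x < T -> is_lub (Eset x) (f x).
Proof. unfold f. destruct (constructive_indefinite_description _ (ex_lub x)) as [m hm]. simpl. auto. Qed.

Lemma K1a x y : 0 < x -> x < y -> y < T -> F y - F x <= f x * (y - x).
Proof.
  intros. destruct (f_lub x ltac:(lra)) as [ub _].
  assert ((F y - F x) / (y - x) <= f x).
  { apply ub. exists (y - x). split; [lra|]. split; [lra|]. replace (x + (y - x)) with y by ring. reflexivity. }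
  apply Rmult_le_compat_r with (r := y - x) in H2; [|lra].
  replace ((F y - F x) / (y - x) * (y - x)) with (F y - F x) in H2 by (field; lra). lra.
Qed.

Lemma K1b x y : 0 < x -> x < y -> y < T -> f y * (y - x) <= F y - F x.
Proof.
  intros. destruct (f_lub y ltac:(lra)) as [_ least].
  assert (f y <= (F y - F x) / (y - x)).
  { apply least. intros s [h [h1 [h2 ->]]]. apply div_le; [lra|lra|].
    pose proof (concave x y (y + h)) as C. replace (y + h - y) with h in C by ring. apply C; lra. }
  apply Rmult_le_compat_r with (r := y - x) in H2; [|lra].
  replace ((F y - F x) / (y - x) * (y - x)) with (F y - F x) in H2 by (field; lra). lra.
Qed.

Lemma f_nonneg x : 0 < x < T -> 0 <= f x.
Proof.
  intros hx. destruct (f_lub x hx) as [ub _]. apply Rle_trans with ((F (x + (T - x) / 2) - F x) / ((T - x) / 2)).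
  - apply slope_nonneg; lra.
  - apply ub. exists ((T - x) / 2). split; [lra|]. split; [lra|reflexivity].
Qed.

Lemma f_noninc x y : 0 < x -> x <= y -> y < T -> f y <= f x.
Proof.
  intros hx hxy hy. destruct (Req_dec x y) as [->|hne]; [lra|].
  pose proof (K1a x y hx ltac:(lra) hy). pose proof (K1b x y hx ltac:(lra) hy).
  assert (f y * (y - x) <= f x * (y - x)) by lra.
  apply Rmult_le_reg_r with (y - x); lra.
Qed.

Lemma f_cadlag : cadlag_on f 0 T.
Proof.
  intros x hx. split.
  - intros eps heps. destruct (f_lub x hx) as [ub least].
    assert (hex : exists h, 0 < h /\ h < T - x /\ (F (x + h) - F x) / h > f x - eps / 2).
    { destruct (classic (exists h, 0 < h /\ h < T - x /\ (F (x + h) - F x) / h > f x - eps / 2)) as [e|hn]; [exact e|].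
      exfalso. assert (f x <= f x - eps / 2); [|lra].
      apply least. intros s [h [h1 [h2 ->]]]. apply Rnot_lt_le. intro hc. apply hn. exists h. auto. }
    destruct hex as [h [h1 [h2 hsl]]].
    assert (hsl' : (F (x + h) - F x) > (f x - eps / 2) * h).
    { apply Rmult_gt_compat_r with (r := h) in hsl; [|lra].
      replace ((F (x + h) - F x) / h * h) with (F (x + h) - F x) in hsl by (field; lra). exact hsl. }
    pose proof (f_nonneg x hx) as hf0.
    set (del := Rmin h (eps * h / (2 * (f x + 1)))).
    assert (hdel0 : 0 < eps * h / (2 * (f x + 1))).
    { apply Rdiv_lt_0_compat; nra. }
    assert (hdel1 : del <= h) by apply Rmin_l.
    assert (hdel2 : del <= eps * h / (2 * (f x + 1))) by apply Rmin_r.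
    assert (hdelp : 0 < del) by (apply Rmin_pos; lra).
    assert (hfd : f x * del <= eps * h / 2).
    { apply Rle_trans with (f x * (eps * h / (2 * (f x + 1)))); [apply Rmult_le_compat_l; lra|].
      apply Rmult_le_reg_r with (2 * (f x + 1)); [lra|].
      replace (f x * (eps * h / (2 * (f x + 1))) * (2 * (f x + 1))) with (f x * (eps * h)) by (field; lra).
      nra. }
    exists del. split; [exact hdelp|]. intros y [hy1 hy2].
    destruct (Req_dec y x) as [->|hne]; [rewrite Rminus_diag, Rabs_R0; lra|].
    assert (hxy : x < y) by lra.
    pose proof (f_noninc x y ltac:(lra) ltac:(lra) ltac:(lra)) as hfy.
    pose proof (K1a x y ltac:(lra) hxy ltac:(lra)) as A1.
    pose proof (K1a y (x + h) ltac:(lra) ltac:(lra) ltac:(lra)) as A2.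
    pose proof (f_nonneg y ltac:(lra)) as hfy0.
    assert (A3 : f x * (y - x) <= f x * del) by (apply Rmult_le_compat_l; lra).
    assert (A4 : f y * (x + h - y) <= f y * h) by (apply Rmult_le_compat_l; lra).
    assert (A5 : (f x - eps) * h < f y * h) by lra.
    assert (f x - eps < f y) by (apply Rmult_lt_reg_r with h; lra).
    rewrite Rabs_left1 by lra. lra.
  - set (E' := fun v => exists y, 0 < y < x /\ v = - f y).
    assert (hb : bound E').
    { exists (- f x). intros v [y [hy ->]]. pose proof (f_noninc y x ltac:(lra) ltac:(lra) ltac:(lra)). lra. }
    assert (hne : exists v, E' v) by (exists (- f (x / 2)); exists (x / 2); split; [lra|reflexivity]).
    destruct (completeness _ hb hne) as [l [ub least]].
    exists (- l). intros eps heps.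
    assert (hex : exists y0, 0 < y0 < x /\ - f y0 > l - eps).
    { destruct (classic (exists y0, 0 < y0 < x /\ - f y0 > l - eps)) as [e|hn]; [exact e|].
      exfalso. assert (l <= l - eps); [|lra].
      apply least. intros v [y [hy ->]]. apply Rnot_lt_le. intro hc. apply hn. exists y. auto. }
    destruct hex as [y0 [hy0 hfy0]].
    exists (x - y0). split; [lra|]. intros y [hy1 hy2].
    pose proof (f_noninc y0 y ltac:(lra) ltac:(lra) ltac:(lra)).
    assert (- f y <= l) by (apply ub; exists y; split; [lra|reflexivity]).
    rewrite Rabs_right by lra. lra.
Qed.
End Ana.


Lemma seq_step_cons2 x y r : seq_step (cons x (cons y r)) = Rmax (Rabs (y - x)) (seq_step (cons y r)).
Proof. reflexivity. Qed.

Section Int.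
Variables (F : R -> R) (T : R).
Hypothesis hT : 0 < T.
Hypothesis Fmono : forall x y, 0 <= x -> x <= y -> y <= T -> F x <= F y.
Hypothesis Ftr : forall u h s, 0 <= u -> 0 < h -> 0 <= s -> u + h + s <= T ->
  F (u + s + h) - F (u + s) <= F (u + h) - F u.
Let g := f F T Fmono Ftr.
Variables a b : R.
Hypothesis ha : 0 < a.
Hypothesis hab : a <= b.
Hypothesis hb : b < T.

Lemma piece x0 xi x1 : a <= x0 -> x0 <= xi -> xi <= x1 -> x1 <= b ->
  Rabs ((x1 - x0) * g xi - (F x1 - F x0)) <= (x1 - x0) * (g x0 - g x1).
Proof.
  intros h1 h2 h3 h4. destruct (Req_dec x0 x1) as [<-|hne].
  - rewrite !Rminus_diag, Rmult_0_l, Rminus_diag, Rabs_R0. lra.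
  - pose proof (K1a F T Fmono Ftr x0 x1 ltac:(lra) ltac:(lra) ltac:(lra)) as A.
    pose proof (K1b F T Fmono Ftr x0 x1 ltac:(lra) ltac:(lra) ltac:(lra)) as B.
    fold g in A, B.
    pose proof (f_noninc F T Fmono Ftr x0 xi ltac:(lra) ltac:(lra) ltac:(lra)) as C1.
    pose proof (f_noninc F T Fmono Ftr xi x1 ltac:(lra) ltac:(lra) ltac:(lra)) as C2.
    fold g in C1, C2.
    assert ((x1 - x0) * g xi <= (x1 - x0) * g x0) by (apply Rmult_le_compat_l; lra).
    assert ((x1 - x0) * g x1 <= (x1 - x0) * g xi) by (apply Rmult_le_compat_l; lra).
    apply Rabs_le. split; nra.
Qed.

Lemma RS_bound : forall s : @SF_seq R, pointed_subdiv s -> a <= SF_h s ->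
  seq.last (SF_h s) (SF_lx s) <= b ->
  SF_h s <= seq.last (SF_h s) (SF_lx s) /\
  Rabs (Riemann_sum g s - (F (seq.last (SF_h s) (SF_lx s)) - F (SF_h s)))
    <= seq_step (SF_lx s) * (g (SF_h s) - g (seq.last (SF_h s) (SF_lx s))).
Proof.
  intro s; induction s as [x0|[x0 xi] s IH] using (@SF_cons_ind R).
  - intros H1 H2 H3. unfold Riemann_sum. simpl. split; [apply Rle_refl|].
    change (zero : R) with 0. rewrite !Rminus_diag, Rabs_R0, Rmult_0_r. lra.
  - intros hp h1 h2.
    assert (hp0 := hp O ltac:(unfold SF_size; simpl; lia)). simpl in hp0.
    assert (hlast : seq.last (SF_h (SF_cons (x0, xi) s)) (SF_lx (SF_cons (x0, xi) s)) = seq.last (SF_h s) (SF_lx s)) by reflexivity.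
    rewrite hlast in *. simpl SF_h in *.
    destruct (IH (ptd_cons _ _ hp) ltac:(lra) h2) as [I1 I2].
    split; [lra|].
    rewrite Riemann_sum_cons. simpl fst; simpl snd.
    change (plus ?u ?v) with (u + v). change (scal ?u ?v) with (u * v).
    change (SF_lx (SF_cons (x0, xi) s)) with (cons x0 (SF_lx s)).
    replace (seq_step (cons x0 (SF_lx s))) with (Rmax (Rabs (SF_h s - x0)) (seq_step (SF_lx s))) by reflexivity.
    set (l := seq.last (SF_h s) (SF_lx s)) in *.
    pose proof (piece x0 xi (SF_h s) ltac:(lra) ltac:(lra) ltac:(lra) ltac:(lra)) as P.
    set (st := seq_step (SF_lx s)) in *.
    assert (hm1 : Rabs (SF_h s - x0) <= Rmax (Rabs (SF_h s - x0)) st) by apply Rmax_l.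
    assert (hm2 : st <= Rmax (Rabs (SF_h s - x0)) st) by apply Rmax_r.
    set (M := Rmax (Rabs (SF_h s - x0)) st) in *.
    rewrite Rabs_right in hm1 by lra.
    pose proof (f_noninc F T Fmono Ftr x0 (SF_h s) ltac:(lra) ltac:(lra) ltac:(lra)) as C1.
    pose proof (f_noninc F T Fmono Ftr (SF_h s) l ltac:(lra) ltac:(lra) ltac:(lra)) as C2.
    fold g in C1, C2.
    assert ((SF_h s - x0) * (g x0 - g (SF_h s)) <= M * (g x0 - g (SF_h s))) by (apply Rmult_le_compat_r; lra).
    assert (st * (g (SF_h s) - g l) <= M * (g (SF_h s) - g l)) by (apply Rmult_le_compat_r; lra).
    replace ((SF_h s - x0) * g xi + Riemann_sum g s - (F l - F x0))
      with (((SF_h s - x0) * g xi - (F (SF_h s) - F x0)) + (Riemann_sum g s - (F l - F (SF_h s)))) by ring.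
    eapply Rle_trans; [apply Rabs_triang|]. lra.
Qed.

Lemma g_is_RInt : a < b -> is_RInt g a b (F b - F a).
Proof.
  intro hlt. unfold is_RInt. apply filterlim_locally. intro eps.
  pose proof (f_noninc F T Fmono Ftr a b ha ltac:(lra) hb) as hgab. fold g in hgab.
  assert (hd : 0 < eps / (g a - g b + 1)) by (apply Rdiv_lt_0_compat; [apply cond_pos|lra]).
  exists (mkposreal _ hd). intros ptd hstep [hp [hh hl]].
  rewrite Rmin_left in hh by lra. rewrite Rmax_right in hl by lra.
  rewrite sign_eq_1 by lra.
  destruct (RS_bound ptd hp ltac:(lra) ltac:(lra)) as [_ B].
  rewrite hl in B. rewrite hh in B. simpl in hstep.
  change (Rabs (1 * Riemann_sum g ptd - (F b - F a)) < eps). rewrite Rmult_1_l.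
  pose proof (seq_step_ge_0 (SF_lx ptd)).
  assert (seq_step (SF_lx ptd) * (g a - g b) <= eps / (g a - g b + 1) * (g a - g b))
    by (apply Rmult_le_compat_r; lra).
  assert (eps / (g a - g b + 1) * (g a - g b) < eps).
  { apply Rmult_lt_reg_r with (g a - g b + 1); [lra|].
    replace (eps / (g a - g b + 1) * (g a - g b) * (g a - g b + 1)) with (eps * (g a - g b)) by (field; lra).
    pose proof (cond_pos eps). nra. }
  lra.
Qed.

Lemma g_RiemannInt : a < b -> exists pr : Riemann_integrable g a b, RiemannInt pr = F b - F a.
Proof.
  intro hlt. pose proof (g_is_RInt hlt) as hI.
  assert (pr : Riemann_integrable g a b) by (apply ex_RInt_Reals_0; eexists; exact hI).
  exists pr. rewrite <- RInt_Reals. apply is_RInt_unique. exact hI.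
Qed.
End Int.


Lemma cadlag_noninc (F h : R -> R) (T : R) :
  (forall x y e, 0 < x -> x <= y -> 0 < e -> y + e <= T -> F (y + e) - F y <= F (x + e) - F x) ->
  cadlag_on h 0 T ->
  (forall a b, 0 < a -> a < b -> b < T -> exists pr : Riemann_integrable h a b, RiemannInt pr = F b - F a) ->
  nonincreasing_on h 0 T.
Proof.
  intros Htr Hc Hd x y hx hxy hy.
  apply Rnot_lt_le. intro hlt.
  set (eta := (h y - h x) / 3).
  assert (heta : 0 < eta) by (unfold eta; lra).
  destruct (proj1 (Hc x ltac:(lra)) eta heta) as [dx [hdx Dx]].
  destruct (proj1 (Hc y ltac:(lra)) eta heta) as [dy [hdy Dy]].
  set (e := Rmin (Rmin dx dy) ((T - y) / 2) / 2).
  assert (he1 : Rmin (Rmin dx dy) ((T - y) / 2) <= dx) by (eapply Rle_trans; [apply Rmin_l|apply Rmin_l]).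
  assert (he2 : Rmin (Rmin dx dy) ((T - y) / 2) <= dy) by (eapply Rle_trans; [apply Rmin_l|apply Rmin_r]).
  assert (he3 : Rmin (Rmin dx dy) ((T - y) / 2) <= (T - y) / 2) by apply Rmin_r.
  assert (he4 : 0 < Rmin (Rmin dx dy) ((T - y) / 2)) by (apply Rmin_pos; [apply Rmin_pos|]; lra).
  assert (he : 0 < e) by (unfold e; lra).
  assert (hex : e < dx) by (unfold e; lra).
  assert (hey : e < dy) by (unfold e; lra).
  assert (heT : y + e < T) by (unfold e; lra).
  destruct (Hd x (x + e) hx ltac:(lra) ltac:(lra)) as [p1 e1].
  destruct (Hd y (y + e) ltac:(lra) ltac:(lra) ltac:(lra)) as [p2 e2].
  pose proof (RiemannInt_P14 x (x + e) (h x + eta)) as c1.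
  pose proof (RiemannInt_P14 y (y + e) (h y - eta)) as c2.
  assert (I1 : RiemannInt p1 <= RiemannInt c1).
  { apply RiemannInt_P19; [lra|]. intros t ht. unfold fct_cte.
    specialize (Dx t ltac:(lra)). apply Rabs_def2 in Dx. lra. }
  assert (I2 : RiemannInt c2 <= RiemannInt p2).
  { apply RiemannInt_P19; [lra|]. intros t ht. unfold fct_cte.
    specialize (Dy t ltac:(lra)). apply Rabs_def2 in Dy. lra. }
  rewrite RiemannInt_P15 in I1, I2.
  pose proof (Htr x y e hx hxy he ltac:(lra)).
  assert ((h x + eta) * (x + e - x) < (h y - eta) * (y + e - y)).
  { replace (x + e - x) with e by ring. replace (y + e - y) with e by ring.
    apply Rmult_lt_compat_r; [lra|]. unfold eta; lra. }
  lra.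
Qed.


Theorem mainTheorem10 (P : prob_space) (H : (R -> R) -> Prop)
  (X : Omega P -> R -> R) (L : (R -> R) -> R -> R -> option R) (T : R) :
  good_H H ->
  periodic_stationary_process P H X ->
  first_time_ilf H L ->
  0 < T -> T <= 1 ->
  (exists f, cadlag_on f 0 T /\ density_on P (fun w => L (X w) 0 T) f 0 T) /\
  (forall f, cadlag_on f 0 T -> density_on P (fun w => L (X w) 0 T) f 0 T ->
     nonincreasing_on f 0 T).
Proof.
  intros hH hX [hL [S [le [hrep hft]]]] hT hT1.
  set (F := fun x => Pr P (fun w => EL L (X w) 0 T 0 x)).
  assert (hG : forall a b, 0 <= a <= b -> F b - F a = Pr P (fun w => EL L (X w) 0 T a b)).
  { intros a b hab. unfold F. rewrite (G_add P H X L T hX hL hT a b hab). ring. }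
  assert (Fmono : forall x y, 0 <= x -> x <= y -> y <= T -> F x <= F y).
  { intros x y h1 h2 h3. pose proof (hG x y ltac:(lra)). pose proof (G_nonneg P H X L T hX hL hT x y). lra. }
  assert (Ftr : forall u h s, 0 <= u -> 0 < h -> 0 <= s -> u + h + s <= T ->
    F (u + s + h) - F (u + s) <= F (u + h) - F u).
  { intros u h s h1 h2 h3 h4. destruct (Req_dec s 0) as [->|hs].
    - rewrite Rplus_0_r. lra.
    - rewrite (hG (u + s) (u + s + h)) by lra. rewrite (hG u (u + h)) by lra.
      apply (G_trans P H X L T hH hX hL S le hrep hft hT); lra. }
  split.
  - exists (f F T Fmono Ftr). split; [apply f_cadlag|].
    intros a b ha hab hb.
    destruct (g_RiemannInt F T Fmono Ftr a b ha ltac:(lra) hb hab) as [pr hpr].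
    exists pr. rewrite hpr. rewrite (hG a b) by lra. reflexivity.
  - intros h hc hd. apply (cadlag_noninc F h T); auto.
    + intros x y e hx hxy he hyT. apply (Ftr' F T Ftr); lra.
    + intros a b ha hab hb. destruct (hd a b ha hab hb) as [pr hpr].
      exists pr. rewrite hpr. rewrite (hG a b) by lra. reflexivity.
Qed.
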